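(* Let $R$ be a commutative domain, $I,J\subseteq R$ two non-zero ideals such that $IJ$ can be generated by $3$ elements, and $\mathfrak m\subseteq R$ a maximal ideal. Then at least one of the following occurs: (1) there exists a non-zero $x\in I_{\mathfrak m}$ such that $(IJ)_{\mathfrak m}/xJ_{\mathfrak m}$ is a cyclic $R_{\mathfrak m}$-module generated by the class of an element of the form $ij$ with $i\in I_{\mathfrak m}$, $j\in J_{\mathfrak m}$; (2) there exists a non-zero $y\in J_{\mathfrak m}$ such that $(IJ)_{\mathfrak m}/yI_{\mathfrak m}$ is a cyclic $R_{\mathfrak m}$-module generated by the class of an element of the form $ij$ with $i\in I_{\mathfrak m}$, $j\in J_{\mathfrak m}$. In particular, if (1) holds (with generator the class of $ij$) then the $R_{\mathfrak m}$-module morphism $I_{\mathfrak m}/xR_{\mathfrak m}\to (IJ)_{\mathfrak m}/xJ_{\mathfrak m}$ induced by multiplication by $j$ is surjective; and if (2) holds (with generator the class of $ij$) then the $R_{\mathfrak m}$-module morphism $J_{\mathfrak m}/yR_{\mathfrak m}\to (IJ)_{\mathfrak m}/yI_{\mathfrak m}$ induced by multiplication by $i$ is surjective.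
   Context: $R_{\mathfrak m}$, $I_{\mathfrak m}$, $J_{\mathfrak m}$, $(IJ)_{\mathfrak m}$ denote localizations at $\mathfrak m$. *)

(* Defs.v *)
From HB Require Import structures.
From mathcomp Require Import all_boot all_order all_algebra.
Set Implicit Arguments. Unset Strict Implicit. Unset Printing Implicit Defensive.
Import GRing.Theory.
Local Open Scope ring_scope.

Definition is_ideal (R : comRingType) (I : R -> Prop) : Prop :=
  [/\ I 0, (forall a b, I a -> I b -> I (a + b)) & (forall r a, I a -> I (r * a))].

Definition nonzero_ideal (R : comRingType) (I : R -> Prop) : Prop :=
  is_ideal I /\ exists a, I a /\ a != 0.

Definition maximal_ideal (R : comRingType) (m : R -> Prop) : Prop :=
  [/\ is_ideal m, ~ m 1 &
      forall J : R -> Prop, is_ideal J -> (forall a, m a -> J a) ->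
        (forall a, J a <-> m a) \/ J 1].

Definition prod_ideal (R : comRingType) (I J : R -> Prop) (z : R) : Prop :=
  exists (n : nat) (f g : 'I_n -> R),
    [/\ forall k, I (f k), forall k, J (g k) & z = \sum_(k < n) f k * g k].

Definition gen_by_3 (R : comRingType) (K : R -> Prop) : Prop :=
  exists a b c : R, forall z, K z <-> exists r1 r2 r3 : R, z = r1 * a + r2 * b + r3 * c.

(* Localization at m, realized inside the fraction field of the domain R:
   S^{-1} I = { a / s : a in I, s notin m }.  R_m = loc m (fun _ => True). *)
Definition loc (R : idomainType) (m : R -> Prop) (I : R -> Prop)
    (z : {fraction R}) : Prop :=
  exists a s : R, [/\ I a, ~ m s & z = (FracField.tofrac a) / (FracField.tofrac s)].

Definition locR (R : idomainType) (m : R -> Prop) := loc m (fun _ => True).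

(* Main.v *)
Require Import Defs.
From HB Require Import structures.
From mathcomp Require Import all_boot all_order all_algebra.
From mathcomp Require Import ring.
From Stdlib Require Import Classical.
Set Implicit Arguments. Unset Strict Implicit.
Import GRing.Theory.
Local Open Scope ring_scope.

Notation tf := (@FracField.tofrac _).

Lemma ideal_True (R : comRingType) : is_ideal (fun _ : R => True).
Proof. by split. Qed.

Lemma max_not1 (R : idomainType) (m : R -> Prop) : maximal_ideal m -> ~ m 1.
Proof. by case. Qed.

Lemma max_nz (R : idomainType) (m : R -> Prop) s : maximal_ideal m -> ~ m s -> s != 0.
Proof. by case=> [[m0 _ _] _ _] ms; apply/eqP => s0; apply: ms; rewrite s0. Qed.

Lemma max_nzF (R : idomainType) (m : R -> Prop) s : maximal_ideal m -> ~ m s -> tf s != 0.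
Proof. by move=> hm ms; rewrite tofrac_eq0; apply: max_nz hm ms. Qed.

Lemma max_prime (R : idomainType) (m : R -> Prop) s t :
  maximal_ideal m -> ~ m s -> ~ m t -> ~ m (s * t).
Proof.
case=> [[m0 mD mM] m1 mx] ms mt mst.
pose K := fun z => exists u r, m u /\ z = u + r * s.
have iK : is_ideal K.
  split.
  - by exists 0, 0; rewrite mul0r addr0.
  - move=> a b [u [r [mu ->]]] [u' [r' [mu' ->]]].
    exists (u + u'), (r + r'); split; first by apply: mD.
    by rewrite mulrDl; ring.
  - move=> r a [u [r' [mu ->]]]; exists (r * u), (r * r'); split; first by apply: mM.
    by ring.
have sub : forall a, m a -> K a by move=> a ma; exists a, 0; rewrite mul0r addr0.
case: (mx K iK sub) => [h | [u [r [mu e]]]].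
  by apply: ms; apply/h; exists 0, 1; rewrite add0r mul1r.
apply: mt.
have -> : t = t * u + r * (s * t) by rewrite mulrA -[t in LHS]mulr1 e; ring.
by apply: mD; apply: mM.
Qed.

Lemma G1 (F : fieldType) (r1 r2 r3 s1 s2 s3 g1 g2 g3 : F) : r1 != 0 ->
  s1 * g1 + s2 * g2 + s3 * g3 = s1/r1  *  (r1 * g1 + r2 * g2 + r3 * g3) + (s2 - s1 * r2/r1) * g2 + (s3 - s1 * r3/r1) * g3.
Proof. by move=> h; field. Qed.

Lemma G2 (F : fieldType) (e r2 r3 s1 s2 s3 g1 g2 g3 : F) : 1 - e != 0 -> g1 = e * g1 + r2 * g2 + r3 * g3 ->
  s1 * g1 + s2 * g2 + s3 * g3 = 0 * 0 + (s2 + s1 * r2/(1-e)) * g2 + (s3 + s1 * r3/(1-e)) * g3.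
Proof.
move=> hd E.
have h1 : g1  *  (1 - e) - (r2 * g2 + r3 * g3) = g1 - (e * g1 + r2 * g2 + r3 * g3) by ring.
rewrite -E subrr in h1; have h2 := subr0_eq h1.
have -> : g1 = (r2 * g2 + r3 * g3) / (1 - e) by rewrite -h2 mulfK.
by field.
Qed.

Lemma G3a (F : fieldType) (r1 r2 r3 a b c : F) : r1 * a + r2 * b + r3 * c = r2 * b + r1 * a + r3 * c.
Proof. by ring. Qed.
Lemma G3b (F : fieldType) (r1 r2 r3 a b c : F) : r1 * a + r2 * b + r3 * c = r3 * c + r2 * b + r1 * a.
Proof. by ring. Qed.

Lemma G4 (F : fieldType) (qa qb qc qd qe qf r1 r2 r3 p1 p2 p3 : F) : qa * qe - qb * qd != 0 ->
  r1 * p1 + r2 * p2 + r3 * p3 =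
  ((r1 * qe - r2 * qd)/(qa * qe - qb * qd))  *  (qa * p1 + qb * p2 + qc * p3)
  + ((r2 * qa - r1 * qb)/(qa * qe - qb * qd))  *  (qd * p1 + qe * p2 + qf * p3)
  + (r3 - ((r1 * qe - r2 * qd)/(qa * qe - qb * qd)) * qc - ((r2 * qa - r1 * qb)/(qa * qe - qb * qd)) * qf)  *  p3.
Proof. by move=> h; field. Qed.

Lemma G5 (F : fieldType) (t1 t2 t3 x ja jb p : F) : t1 * (x * ja) + t2 * (x * jb) + t3 * p = t3 * p + x * (t1 * ja + t2 * jb).
Proof. by ring. Qed.
Lemma G5' (F : fieldType) (t1 t2 t3 y ia ib p : F) : t1 * (ia * y) + t2 * (ib * y) + t3 * p = t3 * p + y * (t1 * ia + t2 * ib).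
Proof. by ring. Qed.

Lemma G6 (F : fieldType) (i1 i2 j v1 v2 v3 p1 p2 p3 : F) : i2 * j = v1 * p1 + v2 * p2 + v3 * p3 ->
  (i1 + i2) * j = (1 + v1) * p1 + v2 * p2 + v3 * p3 + (i1 * j - p1).
Proof. by move=> E; rewrite mulrDl E; ring. Qed.

Lemma G7 (F : fieldType) (u1 u2 v1 v2 : F) : 1 = ((1+v1) * (1+u2) - v2 * u1) - v1 - u2 - v1 * u2 + u1 * v2.
Proof. by ring. Qed.

Lemma G8 (F : fieldType) (e r2 r3 e' r2' r3' g1 g2 g3 : F) :
  (e * g1 + r2 * g2 + r3 * g3) + (e' * g1 + r2' * g2 + r3' * g3) = (e+e') * g1 + (r2+r2') * g2 + (r3+r3') * g3.
Proof. by ring. Qed.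

Lemma G9 (F : fieldType) (x1 x2 x3 y1 y2 y3 s : F) : (x1 * y1 + x2 * y2 + x3 * y3)/s = x1/s * y1 + x2/s * y2 + x3/s * y3.
Proof. by rewrite !mulrDl !(mulrAC _ _ s^-1). Qed.

Lemma G10 (F : fieldType) (p1 p2 p3 : F) : p1 = 1 * p1 + 0 * p2 + 0 * p3. Proof. by ring. Qed.
Lemma G11 (F : fieldType) (p1 p2 p3 : F) : p2 = 0 * p1 + 1 * p2 + 0 * p3. Proof. by ring. Qed.
Lemma G12 (F : fieldType) (u1 u2 : F) : 1 * u2 - 0 * u1 = u2. Proof. by ring. Qed.
Lemma G13 (F : fieldType) (v1 v2 : F) : v1 * 1 - v2 * 0 = v1. Proof. by ring. Qed.
Lemma G14 (F : fieldType) (r i j : F) : r * (i * j) = j * (r * i). Proof. by ring. Qed.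
Lemma G15 (F : fieldType) (r i j : F) : r * (i * j) = 0 * (i * j) + i * (r * j). Proof. by ring. Qed.
Lemma G16 (F : fieldType) (r i j : F) : r * (i * j) = i * (r * j). Proof. by ring. Qed.
Lemma G17 (F : fieldType) (r i j : F) : r * (i * j) = j * 0 + i * (r * j). Proof. by ring. Qed.

Lemma G6b (F : fieldType) (i1 i2 j u1 u2 u3 p1 p2 p3 : F) : i1 * j = u1 * p1 + u2 * p2 + u3 * p3 ->
  (i1 + i2) * j = u1 * p1 + (1 + u2) * p2 + u3 * p3 + (i2 * j - p2).
Proof. by move=> E; rewrite mulrDl E; ring. Qed.
Lemma loc0 (R : idomainType) (m X : R -> Prop) : maximal_ideal m -> is_ideal X -> loc m X 0.
Proof.
move=> hm [X0 _ _]; exists 0, 1; split=> //; first exact: max_not1.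
by rewrite tofrac0 mul0r.
Qed.

Lemma locD (R : idomainType) (m X : R -> Prop) u v : maximal_ideal m -> is_ideal X ->
  loc m X u -> loc m X v -> loc m X (u + v).
Proof.
move=> hm [X0 XD XM] [a [s [Xa ms ->]]] [b [t [Xb mt ->]]].
exists (a * t + b * s), (s * t); split.
- by apply: XD; rewrite mulrC; apply: XM.
- exact: max_prime.
- have hs := max_nzF hm ms; have ht := max_nzF hm mt.
  by rewrite tofracD !tofracM addf_div.
Qed.

Lemma locM (R : idomainType) (m X : R -> Prop) r u : maximal_ideal m -> is_ideal X ->
  locR m r -> loc m X u -> loc m X (r * u).
Proof.
move=> hm [X0 XD XM] [c [s' [_ ms' ->]]] [a [s [Xa ms ->]]].
exists (c * a), (s' * s); split.
- by apply: XM.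
- exact: max_prime.
- by rewrite !tofracM mulf_div.
Qed.

Lemma locR_tf (R : idomainType) (m : R -> Prop) a : maximal_ideal m -> locR m (tf a).
Proof. move=> hm; exists a, 1; split=> //; first exact: max_not1. by rewrite tofrac1 divr1. Qed.

Lemma locR1 (R : idomainType) (m : R -> Prop) : maximal_ideal m -> locR m 1.
Proof. by move=> hm; rewrite -tofrac1; apply: locR_tf. Qed.

Lemma locN (R : idomainType) (m X : R -> Prop) u : maximal_ideal m -> is_ideal X ->
  loc m X u -> loc m X (- u).
Proof.
move=> hm iX hu; rewrite -mulN1r; apply: locM => //.
by rewrite -tofrac1 -tofracN; apply: locR_tf.
Qed.

Lemma locB (R : idomainType) (m X : R -> Prop) u v : maximal_ideal m -> is_ideal X ->
  loc m X u -> loc m X v -> loc m X (u - v).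
Proof. by move=> hm iX hu hv; apply: locD => //; apply: locN. Qed.

Lemma loc_sub (R : idomainType) (m X Y : R -> Prop) u :
  (forall a, X a -> Y a) -> loc m X u -> loc m Y u.
Proof. by move=> h [a [s [Xa ms ->]]]; exists a, s; split=> //; apply: h. Qed.

Lemma locRA (R : idomainType) (m X : R -> Prop) u : loc m X u -> locR m u.
Proof. exact: loc_sub. Qed.

Lemma notP1 (R : idomainType) (m : R -> Prop) : maximal_ideal m -> ~ loc m m 1.
Proof.
move=> hm [a [s [ma ms e]]].
have hs := max_nzF hm ms.
have : tf a = tf s by rewrite -(divfK hs (tf a)) -e mul1r.
by move/eqP; rewrite tofrac_eq => /eqP ea; apply: ms; rewrite -ea.
Qed.

Definition U (R : idomainType) (m : R -> Prop) (u : {fraction R}) :=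
  locR m u /\ ~ loc m m u.

Lemma U_inv (R : idomainType) (m : R -> Prop) u : maximal_ideal m -> U m u ->
  u != 0 /\ locR m u^-1.
Proof.
move=> hm [[a [s [_ ms ->]]] nP].
have ma : ~ m a by move=> ma; apply: nP; exists a, s.
have ha := max_nzF hm ma; have hs := max_nzF hm ms.
split; first by rewrite mulf_neq0 // invr_eq0.
exists s, a; split=> //; by rewrite invfM invrK mulrC.
Qed.

Lemma A_cases (R : idomainType) (m : R -> Prop) u : locR m u -> loc m m u \/ U m u.
Proof. by move=> h; case: (classic (loc m m u)) => hP; [left | right]. Qed.

Lemma U_1B (R : idomainType) (m : R -> Prop) e : maximal_ideal m -> loc m m e -> U m (1 - e).
Proof.
move=> hm he; have im : is_ideal m by case: hm.
split.
  by apply: locB; [done | exact: ideal_True | exact: locR1 | exact: locRA he].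
move=> h; apply: (notP1 hm); have -> : (1 : {fraction R}) = (1 - e) + e by rewrite subrK.
exact: locD.
Qed.
Definition Prod (R : idomainType) (m I J : R -> Prop) (q : {fraction R}) :=
  exists i j, [/\ loc m I i, loc m J j & q = i * j].

Definition span3 (R : idomainType) (m : R -> Prop) (a b c z : {fraction R}) :=
  exists r1 r2 r3, [/\ locR m r1, locR m r2, locR m r3 & z = r1 * a + r2 * b + r3 * c].

Definition SP (R : idomainType) (m I J : R -> Prop) (g : {fraction R}) :=
  exists n (f : 'I_n -> {fraction R}), (forall k, Prod m I J (f k)) /\ g = \sum_(k < n) f k.

Lemma loc_tf (R : idomainType) (m X : R -> Prop) a : maximal_ideal m -> X a -> loc m X (tf a).
Proof. move=> hm Xa; exists a, 1; split=> //; first exact: max_not1. by rewrite tofrac1 divr1. Qed.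

Lemma Prod_M (R : idomainType) (m I J : R -> Prop) q : maximal_ideal m ->
  Prod m I J q -> loc m (prod_ideal I J) q.
Proof.
move=> hm [i [j [[a [s [Ia ms ei]]] [b [t [Jb mt ej]]] ->]]]; rewrite ei ej.
exists (a * b), (s * t); split.
- by exists 1%N, (fun _ => a), (fun _ => b); split=> //; rewrite big_ord1.
- exact: max_prime.
- by rewrite !tofracM mulf_div.
Qed.

Lemma span_swap12 (R : idomainType) (m : R -> Prop) a b c z :
  span3 m a b c z -> span3 m b a c z.
Proof. by case=> r1 [r2 [r3 [h1 h2 h3 ->]]]; exists r2, r1, r3; split=> //; apply: G3a. Qed.

Lemma span_swap13 (R : idomainType) (m : R -> Prop) a b c z :
  span3 m a b c z -> span3 m c b a z.
Proof. by case=> r1 [r2 [r3 [h1 h2 h3 ->]]]; exists r3, r2, r1; split=> //; apply: G3b. Qed.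

Lemma exch (R : idomainType) (m I J : R -> Prop) g1 g2 g3 :
  maximal_ideal m -> is_ideal I -> is_ideal J -> SP m I J g1 ->
  (forall z, loc m (prod_ideal I J) z -> span3 m g1 g2 g3 z) ->
  exists q, Prod m I J q /\ (forall z, loc m (prod_ideal I J) z -> span3 m q g2 g3 z).
Proof.
move=> hm iI iJ hSP hgen.
have im : is_ideal m by case: hm.
have iT := ideal_True R.
case: (classic (exists q r1 r2 r3, [/\ Prod m I J q, U m r1, locR m r2, locR m r3 &
                  q = r1 * g1 + r2 * g2 + r3 * g3])).
  case=> q [r1 [r2 [r3 [Pq Ur1 Ar2 Ar3 Eq]]]].
  exists q; split=> // z /hgen [s1 [s2 [s3 [As1 As2 As3 ->]]]].
  have [r1nz Ar1i] := U_inv hm Ur1.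
  exists (s1 / r1), (s2 - s1 * r2 / r1), (s3 - s1 * r3 / r1); split.
  - exact: locM.
  - by apply: locB => //; apply: locM => //; apply: locM.
  - by apply: locB => //; apply: locM => //; apply: locM.
  - by rewrite Eq; apply: G1.
move=> nq.
pose Good g := exists e r2 r3, [/\ loc m m e, locR m r2, locR m r3 &
                  g = e * g1 + r2 * g2 + r3 * g3].
have GP : forall q, Prod m I J q -> Good q.
  move=> q Pq; have [r1 [r2 [r3 [A1 A2 A3 Eq]]]] := hgen q (Prod_M hm Pq).
  case: (A_cases A1) => [P1 | U1]; first by exists r1, r2, r3.
  by exfalso; apply: nq; exists q, r1, r2, r3.
have G0 : Good 0.
  exists 0, 0, 0; split; [exact: loc0 | exact: loc0 | exact: loc0 |].
  by rewrite !mul0r !addr0.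
have GD : forall a b, Good a -> Good b -> Good (a + b).
  move=> a b [e [r2 [r3 [He H2 H3 ->]]]] [e' [r2' [r3' [He' H2' H3' ->]]]].
  exists (e + e'), (r2 + r2'), (r3 + r3'); split; try exact: locD.
  exact: G8.
have Gg1 : Good g1.
  case: hSP => n [f [Pf ->]].
  by apply: (big_ind Good) => // k _; apply: GP.
case: Gg1 => e [r2 [r3 [He A2 A3 Eg]]].
have [hd _] := U_inv hm (U_1B hm He).
exists 0; split.
  exists 0, 0; split; [exact: loc0 | exact: loc0 | by rewrite mul0r].
move=> z /hgen [s1 [s2 [s3 [As1 As2 As3 ->]]]].
have [_ Ai] := U_inv hm (U_1B hm He).
exists 0, (s2 + s1 * r2 / (1 - e)), (s3 + s1 * r3 / (1 - e)); split.
- exact: loc0.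
- by apply: locD => //; apply: locM => //; apply: locM.
- by apply: locD => //; apply: locM => //; apply: locM.
- exact: G2.
Qed.
Definition Concl (R : idomainType) (I J m : R -> Prop) :=
  (exists x i j : {fraction R},
     x != 0 /\ loc m I x /\ loc m I i /\ loc m J j /\
      (forall z, loc m (prod_ideal I J) z ->
         exists r j', [/\ locR m r, loc m J j' & z = r * (i * j) + x * j']) /\
      (forall z, loc m (prod_ideal I J) z ->
         exists i' j', [/\ loc m I i', loc m J j' & z = j * i' + x * j']))
  \/
  (exists y i j : {fraction R},
     y != 0 /\ loc m J y /\ loc m I i /\ loc m J j /\
      (forall z, loc m (prod_ideal I J) z ->
         exists r i', [/\ locR m r, loc m I i' & z = r * (i * j) + y * i']) /\
      (forall z, loc m (prod_ideal I J) z ->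
         exists j' i', [/\ loc m J j', loc m I i' & z = i * j' + y * i'])).

Lemma pack0 (R : idomainType) (I J m : R -> Prop) i j :
  maximal_ideal m -> is_ideal I -> is_ideal J -> loc m I i -> loc m J j ->
  (exists z0, loc m (prod_ideal I J) z0 /\ z0 != 0) ->
  (forall z, loc m (prod_ideal I J) z -> exists r, locR m r /\ z = r * (i * j)) ->
  Concl I J m.
Proof.
move=> hm iI iJ Ii Jj [z0 [Mz0 z0nz]] h.
have inz : i != 0.
  apply/eqP => i0; have [r [_ E]] := h z0 Mz0.
  by move: z0nz; rewrite E i0 mul0r mulr0 eqxx.
left; exists i, i, j; do 4 (split=> //).
split=> z /h [r [Ar ->]].
  exists 0, (r * j); split; [exact: loc0 (ideal_True R) | exact: locM | exact: G15].
exists 0, (r * j); split; [exact: loc0 | exact: locM | exact: G17].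
Qed.

Lemma pack1 (R : idomainType) (I J m : R -> Prop) x i j :
  maximal_ideal m -> is_ideal I -> is_ideal J -> loc m I x -> loc m I i -> loc m J j ->
  (exists z0, loc m (prod_ideal I J) z0 /\ z0 != 0) ->
  (forall z, loc m (prod_ideal I J) z ->
     exists r j', [/\ locR m r, loc m J j' & z = r * (i * j) + x * j']) ->
  Concl I J m.
Proof.
move=> hm iI iJ Ix Ii Jj hz h.
case: (eqVneq x 0) => [x0 | xnz].
  apply: (pack0 hm iI iJ Ii Jj hz) => z /h [r [j' [Ar _ ->]]].
  by exists r; rewrite x0 mul0r addr0.
left; exists x, i, j; do 4 (split=> //); split=> // z /h [r [j' [Ar Jj' ->]]].
by exists (r * i), j'; split=> //; [exact: locM | rewrite G14].
Qed.

Lemma pack2 (R : idomainType) (I J m : R -> Prop) y i j :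
  maximal_ideal m -> is_ideal I -> is_ideal J -> loc m J y -> loc m I i -> loc m J j ->
  (exists z0, loc m (prod_ideal I J) z0 /\ z0 != 0) ->
  (forall z, loc m (prod_ideal I J) z ->
     exists r i', [/\ locR m r, loc m I i' & z = r * (i * j) + y * i']) ->
  Concl I J m.
Proof.
move=> hm iI iJ Jy Ii Jj hz h.
case: (eqVneq y 0) => [y0 | ynz].
  apply: (pack0 hm iI iJ Ii Jj hz) => z /h [r [i' [Ar _ ->]]].
  by exists r; rewrite y0 mul0r addr0.
right; exists y, i, j; do 4 (split=> //); split=> // z /h [r [i' [Ar Ii' ->]]].
by exists (r * j), i'; split=> //; [exact: locM | rewrite G16].
Qed.

Lemma cramer (R : idomainType) (m : R -> Prop) p1 p2 p3 w1 w2 qa qb qc qd qe qf z :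
  maximal_ideal m -> locR m qa -> locR m qb -> locR m qc -> locR m qd -> locR m qe ->
  locR m qf -> U m (qa * qe - qb * qd) ->
  w1 = qa * p1 + qb * p2 + qc * p3 -> w2 = qd * p1 + qe * p2 + qf * p3 ->
  span3 m p1 p2 p3 z ->
  exists t1 t2 t3, [/\ locR m t1, locR m t2, locR m t3 & z = t1 * w1 + t2 * w2 + t3 * p3].
Proof.
move=> hm Aa Ab Ac Ad Ae Af UD -> -> [r1 [r2 [r3 [A1 A2 A3 ->]]]].
have iT := ideal_True R.
have [Dnz Ai] := U_inv hm UD.
have h1 : locR m ((r1 * qe - r2 * qd) / (qa * qe - qb * qd)).
  by rewrite mulrC; apply: locM => //; apply: locB => //; apply: locM.
have h2 : locR m ((r2 * qa - r1 * qb) / (qa * qe - qb * qd)).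
  by rewrite mulrC; apply: locM => //; apply: locB => //; apply: locM.
eexists _, _, _; split; [exact: h1 | exact: h2 | | exact: G4].
by apply: locB => //; [apply: locB => // |]; rewrite mulrC; apply: locM.
Qed.
Lemma main3 (R : idomainType) (I J m : R -> Prop) i1 i2 i3 j1 j2 j3 :
  maximal_ideal m -> is_ideal I -> is_ideal J ->
  loc m I i1 -> loc m I i2 -> loc m I i3 -> loc m J j1 -> loc m J j2 -> loc m J j3 ->
  (exists z0, loc m (prod_ideal I J) z0 /\ z0 != 0) ->
  (forall z, loc m (prod_ideal I J) z -> span3 m (i1 * j1) (i2 * j2) (i3 * j3) z) ->
  Concl I J m.
Proof.
move=> hm iI iJ I1 I2 I3 J1 J2 J3 hz hgen.
have im : is_ideal m by case: hm.
have iT := ideal_True R.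
have A0 : locR m 0 by exact: loc0.
have A1 : locR m 1 by exact: locR1.
have [u1 [u2 [u3 [Au1 Au2 Au3 Eu]]]] :
    span3 m (i1 * j1) (i2 * j2) (i3 * j3) (i1 * j2).
  by apply: hgen; apply: Prod_M => //; exists i1, j2.
have [v1 [v2 [v3 [Av1 Av2 Av3 Ev]]]] :
    span3 m (i1 * j1) (i2 * j2) (i3 * j3) (i2 * j1).
  by apply: hgen; apply: Prod_M => //; exists i2, j1.
case: (A_cases Au2) => [Pu2 | Uu2].
2:{ apply: (pack1 (x := i1) hm iI iJ I1 I3 J3 hz) => z /hgen hs.
    have [t1 [t2 [t3 [At1 At2 At3 ->]]]] :=
      cramer hm A1 A0 A0 Au1 Au2 Au3 (eq_ind_r (U m) Uu2 (G12 _ _)) (G10 _ _ _) Eu hs.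
    exists t3, (t1 * j1 + t2 * j2); split=> //; last exact: G5.
    by apply: locD => //; apply: locM. }
case: (A_cases Av1) => [Pv1 | Uv1].
2:{ apply: (pack1 (x := i2) hm iI iJ I2 I3 J3 hz) => z /hgen hs.
    have [t1 [t2 [t3 [At1 At2 At3 ->]]]] :=
      cramer hm Av1 Av2 Av3 A0 A1 A0 (eq_ind_r (U m) Uv1 (G13 _ _)) Ev (G11 _ _ _) hs.
    exists t3, (t1 * j1 + t2 * j2); split=> //; last exact: G5.
    by apply: locD => //; apply: locM. }
have Ew1 : (i1 + i2) * j1 = (1 + v1) * (i1 * j1) + v2 * (i2 * j2) + v3 * (i3 * j3).
  by rewrite (G6 i1 Ev) subrr addr0.
have Ew2 : (i1 + i2) * j2 = u1 * (i1 * j1) + (1 + u2) * (i2 * j2) + u3 * (i3 * j3).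
  by rewrite (G6b i2 Eu) subrr addr0.
have AD : locR m ((1 + v1) * (1 + u2) - v2 * u1).
  by apply: locB => //; apply: locM => //; apply: locD.
case: (A_cases AD) => [PD | UD].
2:{ apply: (pack1 (x := i1 + i2) hm iI iJ (locD hm iI I1 I2) I3 J3 hz) => z /hgen hs.
    have Av1' : locR m (1 + v1) by apply: locD.
    have Au2' : locR m (1 + u2) by apply: locD.
    have [t1 [t2 [t3 [At1 At2 At3 ->]]]] :=
      cramer hm Av1' Av2 Av3 Au1 Au2' Au3 UD Ew1 Ew2 hs.
    exists t3, (t1 * j1 + t2 * j2); split=> //; last exact: G5.
    by apply: locD => //; apply: locM. }
have Uv2 : U m v2.
  case: (A_cases Av2) => // Pv2; exfalso; apply: (notP1 hm).
  rewrite (G7 u1 u2 v1 v2).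
  apply: locD => //; last by apply: locM.
  apply: locB => //; last by apply: locM.
  by apply: locB => //; apply: locB.
apply: (pack2 (y := j1) hm iI iJ J1 I3 J3 hz) => z /hgen hs.
have [t1 [t2 [t3 [At1 At2 At3 ->]]]] :=
  cramer hm A1 A0 A0 Av1 Av2 Av3 (eq_ind_r (U m) Uv2 (G12 _ _)) (G10 _ _ _) Ev hs.
exists t3, (t1 * i1 + t2 * i2); split=> //; last exact: G5'.
by apply: locD => //; apply: locM.
Qed.
Lemma SP_of (R : idomainType) (I J m : R -> Prop) w :
  maximal_ideal m -> prod_ideal I J w -> SP m I J (tf w).
Proof.
move=> hm [n [f [g [If Jg ->]]]].
exists n, (fun k => tf (f k) * tf (g k)); split.
  by move=> k; exists (tf (f k)), (tf (g k)); split=> //; apply: loc_tf.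
by rewrite rmorph_sum; apply: eq_bigr => k _; rewrite rmorphM.
Qed.

Lemma final (R : idomainType) (I J m : R -> Prop) :
  nonzero_ideal I -> nonzero_ideal J -> gen_by_3 (prod_ideal I J) ->
  maximal_ideal m -> Concl I J m.
Proof.
move=> [iI [a0 [Ia0 a0nz]]] [iJ [b0 [Jb0 b0nz]]] [a [b [c gen]]] hm.
have hz : exists z0, loc m (prod_ideal I J) z0 /\ z0 != 0.
  exists (tf (a0 * b0)); split.
    apply: loc_tf => //; exists 1%N, (fun _ => a0), (fun _ => b0).
    by split=> //; rewrite big_ord1.
  by rewrite tofrac_eq0 mulf_neq0.
have SPa : SP m I J (tf a).
  apply: SP_of => //; apply/gen; exists 1, 0, 0; by rewrite mul1r !mul0r !addr0.
have SPb : SP m I J (tf b).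
  apply: SP_of => //; apply/gen; exists 0, 1, 0; by rewrite mul1r !mul0r add0r addr0.
have SPc : SP m I J (tf c).
  apply: SP_of => //; apply/gen; exists 0, 0, 1; by rewrite mul1r !mul0r !add0r.
have hgen0 : forall z, loc m (prod_ideal I J) z -> span3 m (tf a) (tf b) (tf c) z.
  move=> z [w [s [Iw ms ->]]].
  have [r1 [r2 [r3 E]]] := (gen w).1 Iw.
  exists (tf r1 / tf s), (tf r2 / tf s), (tf r3 / tf s); split.
  - by exists r1, s.
  - by exists r2, s.
  - by exists r3, s.
  - by rewrite E !tofracD !tofracM G9.
have [q1 [P1 h1]] := exch hm iI iJ SPa hgen0.
have h1' : forall z, loc m (prod_ideal I J) z -> span3 m (tf b) q1 (tf c) z.
  by move=> z hz'; apply: span_swap12; apply: h1.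
have [q2 [P2 h2]] := exch hm iI iJ SPb h1'.
have h2' : forall z, loc m (prod_ideal I J) z -> span3 m (tf c) q1 q2 z.
  by move=> z hz'; apply: span_swap13; apply: h2.
have [q3 [P3 h3]] := exch hm iI iJ SPc h2'.
case: P1 h3 => i1 [j1 [I1 J1 ->]].
case: P2 => i2 [j2 [I2 J2 ->]].
case: P3 => i3 [j3 [I3 J3 ->]] h3.
exact: (main3 hm iI iJ I3 I1 I2 J3 J1 J2 hz h3).
Qed.

Theorem lemma4p9 (R : idomainType) (I J m : R -> Prop) :
  nonzero_ideal I -> nonzero_ideal J -> gen_by_3 (prod_ideal I J) ->
  maximal_ideal m ->
  (exists x i j : {fraction R},
     x != 0 /\ loc m I x /\ loc m I i /\ loc m J j /\
      (* (IJ)_m / x J_m is cyclic, generated by the class of i*j *)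
      (forall z, loc m (prod_ideal I J) z ->
         exists r j', [/\ locR m r, loc m J j' & z = r * (i * j) + x * j']) /\
      (* the map I_m / x R_m -> (IJ)_m / x J_m, multiplication by j, is onto *)
      (forall z, loc m (prod_ideal I J) z ->
         exists i' j', [/\ loc m I i', loc m J j' & z = j * i' + x * j']))
  \/
  (exists y i j : {fraction R},
     y != 0 /\ loc m J y /\ loc m I i /\ loc m J j /\
      (* (IJ)_m / y I_m is cyclic, generated by the class of i*j *)
      (forall z, loc m (prod_ideal I J) z ->
         exists r i', [/\ locR m r, loc m I i' & z = r * (i * j) + y * i']) /\
      (* the map J_m / y R_m -> (IJ)_m / y I_m, multiplication by i, is onto *)
      (forall z, loc m (prod_ideal I J) z ->
         exists j' i', [/\ loc m J j', loc m I i' & z = i * j' + y * i'])).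
Proof. exact: final. Qed.
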